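(* Let $t\in[0,T]$. (a) For every $X\in\mathbb{L}^\infty(\mathbb{R}_-,\mathcal{F}_T)$ there exists a unique $Z_t\in\mathbb{L}^\infty(\mathbb{R}_-,\mathcal{F}_t)$ such that $\operatorname{ess\,inf}_{\mathcal{F}_0}(Z_t1_{F_t})=\operatorname{ess\,inf}_{\mathcal{F}_0}(X1_{F_t})$ for all $F_t\in\mathcal{F}_t$. (b) For every $X\in\mathbb{L}^\infty(\mathbb{R},\mathcal{F}_T)$ with $X<0$ a.s. there exists a unique $Z_t\in\mathbb{L}^0(\mathbb{R}_-,\mathcal{F}_t)$ bounded from below such that $\operatorname{ess\,inf}_{\mathcal{F}_0}(Z_t1_{F_t})=\operatorname{ess\,inf}_{\mathcal{F}_0}(X1_{F_t})$ for all $F_t\in\mathcal{F}_t$.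
   Context: Let $(\Omega,\mathcal{F},\mathbb{P})$ be a complete probability space and $(\mathcal{F}_t)_{t\in[0,T]}$ a filtration of complete sub-$\sigma$-algebras of $\mathcal{F}$ ($\mathcal{F}_s\subseteq\mathcal{F}_t$ for $s\le t$). $\mathbb{L}^0(G,\mathcal{G})$ denotes the $\mathcal{G}$-measurable random variables a.s. valued in $G$ and $\mathbb{L}^\infty(G,\mathcal{G})$ the essentially bounded ones; $\mathbb{R}_-=(-\infty,0]$. For a sub-$\sigma$-algebra $\mathcal{G}$, $\operatorname{ess\,sup}_{\mathcal{G}}(Y)$ is the smallest (a.s.) $\mathcal{G}$-measurable $\overline{\mathbb{R}}$-valued random variable dominating $Y$ a.s., and $\operatorname{ess\,inf}_{\mathcal{G}}(Y)=-\operatorname{ess\,sup}_{\mathcal{G}}(-Y)$ is the largest $\mathcal{G}$-measurable random variable dominated by $Y$ a.s. *)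

(* Defs.v *)
From HB Require Import structures.
From mathcomp Require Import all_boot all_order all_algebra.
From mathcomp Require Import all_classical all_reals all_analysis measurable_realfun.
From Stdlib Require Import ClassicalEpsilon.
Set Implicit Arguments. Unset Strict Implicit. Unset Printing Implicit Defensive.
Import Order.TTheory GRing.Theory Num.Theory.
Local Open Scope classical_set_scope.
Local Open Scope ring_scope.

Section defs.
Context d (Omega : measurableType d) (R : realType).
Variable P : probability Omega R.

Definition complete_sub_sigma_algebra (G : set (set Omega)) :=
  [/\ sigma_algebra setT G, G `<=` measurable & P.-negligible `<=` G].

Definition filtration (T : R) (F : R -> set (set Omega)) :=
  (forall s, 0 <= s <= T -> complete_sub_sigma_algebra (F s)) /\
  (forall s u, 0 <= s -> s <= u -> u <= T -> F s `<=` F u).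

Definition Gmeas (G : set (set Omega)) (f : Omega -> R) :=
  forall B : set R, measurable B -> G (f @^-1` B).
Definition Gmeas_e (G : set (set Omega)) (f : Omega -> \bar R) :=
  forall B : set (\bar R), measurable B -> G (f @^-1` B).

Definition is_cond_esssup (G : set (set Omega)) (Y W : Omega -> \bar R) :=
  [/\ Gmeas_e G W, {ae P, forall w, (Y w <= W w)%E} &
      forall V, Gmeas_e G V -> {ae P, forall w, (Y w <= V w)%E} ->
        {ae P, forall w, (W w <= V w)%E}].

Definition cond_esssup (G : set (set Omega)) (Y : Omega -> \bar R) : Omega -> \bar R :=
  epsilon (inhabits (fun _ => +oo%E)) (is_cond_esssup G Y).

Definition cond_essinf (G : set (set Omega)) (Y : Omega -> \bar R) : Omega -> \bar R :=
  fun w => (- cond_esssup G (fun w => - Y w)%E w)%E.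

Definition mul_ind (X : Omega -> R) (A : set Omega) : Omega -> \bar R :=
  fun w => (X w * \1_A w)%:E.

Definition Linf_neg (G : set (set Omega)) (X : Omega -> R) :=
  [/\ Gmeas G X, (exists M : R, {ae P, forall w, `|X w| <= M}) &
      {ae P, forall w, X w <= 0}].

Definition L0_neg_bdd_below (G : set (set Omega)) (X : Omega -> R) :=
  [/\ Gmeas G X, (exists m : R, {ae P, forall w, m <= X w}) &
      {ae P, forall w, X w <= 0}].

Definition Linf (G : set (set Omega)) (X : Omega -> R) :=
  Gmeas G X /\ (exists M : R, {ae P, forall w, `|X w| <= M}).

Definition same_essinf (F0 Ft : set (set Omega)) (Z X : Omega -> R) :=
  forall A, Ft A ->
    {ae P, forall w, cond_essinf F0 (mul_ind Z A) w = cond_essinf F0 (mul_ind X A) w}.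

End defs.

(* Main.v *)
Require Import Defs.
From HB Require Import structures.
From mathcomp Require Import all_boot all_order all_algebra.
From mathcomp Require Import all_classical all_reals all_analysis measurable_realfun.
From Stdlib Require Import ClassicalEpsilon.
Import Order.TTheory GRing.Theory Num.Theory.
Local Open Scope classical_set_scope.
Local Open Scope ring_scope.

Section S.
Context d (Omega : measurableType d) (R : realType) (P : probability Omega R).
Local Open Scope ereal_scope.

Lemma GmeasP (G : set (set Omega)) (sG : sigma_algebra setT G) (f : Omega -> \bar R) :
  Gmeas_e G f <-> measurable_fun [set: g_sigma_algebraType G] (f : g_sigma_algebraType G -> \bar R).
Proof.
have E := measurable_g_measurableTypeE sG.
split.
- move=> h _ B mB; rewrite setTI E; exact: h.
- move=> h B mB; have := h measurableT B mB; rewrite setTI E; exact.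
Qed.

Lemma GmeasrP (G : set (set Omega)) (sG : sigma_algebra setT G) (f : Omega -> R) :
  Gmeas G f <-> measurable_fun [set: g_sigma_algebraType G] (f : g_sigma_algebraType G -> R).
Proof.
have E := measurable_g_measurableTypeE sG.
split.
- move=> h _ B mB; rewrite setTI E; exact: h.
- move=> h B mB; have := h measurableT B mB; rewrite setTI E; exact.
Qed.

Lemma Gmeas_meas (G : set (set Omega)) (Gm : G `<=` measurable) (f : Omega -> \bar R) :
  Gmeas_e G f -> measurable_fun [set: Omega] f.
Proof. by move=> h _ B mB; rewrite setTI; apply: Gm; exact: h. Qed.

Lemma Gmeas_sub (G H : set (set Omega)) (f : Omega -> \bar R) :
  G `<=` H -> Gmeas_e G f -> Gmeas_e H f.
Proof. by move=> GH h B mB; apply: GH; exact: h. Qed.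

Lemma Gmeas_cst (G : set (set Omega)) (sG : sigma_algebra setT G) (c : \bar R) :
  Gmeas_e G (fun _ => c).
Proof. by apply/GmeasP => //; exact: measurable_cst. Qed.

Lemma cond_esssup_uniq G Y W1 W2 : is_cond_esssup P G Y W1 -> is_cond_esssup P G Y W2 ->
  {ae P, forall w, W1 w = W2 w}.
Proof.
move=> [m1 y1 h1] [m2 y2 h2].
have := h1 _ m2 y2; have := h2 _ m1 y1; apply: filterS2 => w a b.
by apply/eqP; rewrite eq_le a b.
Qed.


Lemma cond_esssup_exists G (sG : sigma_algebra setT G) (Gm : G `<=` measurable)
  (Y : Omega -> \bar R) (M : R) : (0 <= M)%R ->
  {ae P, forall w, 0 <= Y w <= M%:E} -> exists W, is_cond_esssup P G Y W.
Proof.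
move=> M0 YM.
pose Vset := [set V : Omega -> \bar R | [/\ Gmeas_e G V, (forall w, 0 <= V w <= M%:E)
   & {ae P, forall w, Y w <= V w}]].
pose S := [set \int[P]_x V x | V in Vset].
pose a := ereal_inf S.
have intM V : Vset V -> 0 <= \int[P]_x V x <= M%:E.
  move=> [mV VM _]; apply/andP; split.
    by apply: integral_ge0 => x _; case/andP: (VM x).
  apply: (@le_trans _ _ (\int[P]_x (cst M%:E) x)).
    apply: ge0_le_integral => //.
    - by move=> x _; case/andP: (VM x).
    - exact: Gmeas_meas mV.
    - by move=> x _; case/andP: (VM x).
  rewrite integral_cst //.
  by rewrite [X in (_ * X)%E](_ : _ = 1%E) ?mule1 //; exact: probability_setT.
have VsetM : Vset (fun _ => M%:E).
  split; first exact: Gmeas_cst.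
  - by move=> w; rewrite lexx lee_fin M0.
  - by apply: filterS YM => w /andP[].
have a0 : 0 <= a.
  by apply: le_ereal_inf_tmp => _ [V VV <-]; case/andP: (intM V VV).
have aM : a <= M%:E.
  by apply: ereal_inf_lbound; exists (fun _ => M%:E) => //; rewrite integral_cst // [X in (_ * X)%E](_ : _ = 1%E) ?mule1 //; exact: probability_setT.
have afin : a \is a fin_num by rewrite ge0_fin_numE // (le_lt_trans aM) // ltey.
have : forall n : nat, exists V, Vset V /\ \int[P]_x V x < a + (n.+1%:R^-1)%:E.
  move=> n; have e0 : (0 < n.+1%:R^-1 :> R)%R by rewrite invr_gt0.
  have [_ [V VV <-] h] := lb_ereal_inf_adherent e0 afin.
  by exists V.
move=> /ClassicalEpsilon.choice[Vs hVs].
pose W := fun w => einfs (fun n => Vs n w) 0%N.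
have mW : Gmeas_e G W.
  apply/GmeasP => //.
  apply: (measurable_fun_einfs (f := Vs : (g_sigma_algebraType G -> \bar R)^nat)).
  by move=> n; apply/GmeasP => //; case: (hVs n) => -[].
have WV n w : W w <= Vs n w.
  by apply: ereal_inf_lbound; exists n.
have W0 w : 0 <= W w.
  by apply: le_ereal_inf_tmp => _ [n _ <-]; case: (hVs n) => -[_ h _] _; case/andP: (h w).
have WM w : W w <= M%:E.
  by apply: (le_trans (WV 0%N w)); case: (hVs 0%N) => -[_ h _] _; case/andP: (h w).
have YW : {ae P, forall w, Y w <= W w}.
  have : {ae P, forall w, forall n, Y w <= Vs n w}.
    by apply: ae_foralln => n; case: (hVs n) => -[].
  apply: filterS => w h; apply: le_ereal_inf_tmp => _ [n _ <-]; exact: h.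
have VsetW : Vset W by split => // w; rewrite W0 WM.
have intWa : \int[P]_x W x <= a.
  apply/lee_addgt0Pr => e e0.
  have [N _ hN] := near_infty_natSinv_lt (PosNum e0).
  have {hN} hN := hN N (leqnn N).
  apply: (le_trans (y := \int[P]_x Vs N x)).
    have mVN : Gmeas_e G (Vs N) by case: (hVs N) => -[].
    apply: ge0_le_integral => //.
    - exact: Gmeas_meas mW.
    - exact: Gmeas_meas mVN.
  have [_ hN'] := hVs N; apply: (le_trans (ltW hN')).
  by rewrite leeD2l // lee_fin ltW.
exists W; split => // V mV YV.
pose U := fun w => mine (W w) (mine (maxe (V w) 0) M%:E).
have mU : Gmeas_e G U.
  apply/GmeasP => //; apply: measurable_mine; first exact/GmeasP.
  apply: measurable_mine; last exact: measurable_cst.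
  by apply: measurable_maxe; [exact/GmeasP|exact: measurable_cst].
have U0 w : 0 <= U w.
  by rewrite /U !le_min W0 le_max lexx orbT lee_fin M0.
have UW w : U w <= W w by rewrite /U ge_min lexx.
have VsetU : Vset U.
  split => // [w|]; first by rewrite U0 (le_trans (UW w)).
  move: YW YV YM; apply: filterS3 => w h1 h2 /andP[h3 h4].
  by rewrite /U !le_min h1 h4 le_max h2.
have aU : a <= \int[P]_x U x by apply: ereal_inf_lbound; exists U.
have WUfin w : U w \is a fin_num.
  by rewrite ge0_fin_numE // (le_lt_trans (UW w)) // (le_lt_trans (WM w)) // ltey.
have mUm : measurable_fun setT U := @Gmeas_meas G Gm U mU.
have mWm : measurable_fun setT W := @Gmeas_meas G Gm W mW.
have mD : measurable_fun [set: Omega] (fun w => W w - U w).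
  exact: emeasurable_funB.
have D0 w : 0 <= W w - U w by rewrite sube_ge0 ?WUfin ?orbT // UW.
have intD : \int[P]_x (W x - U x) = 0.
  have E : \int[P]_x W x = \int[P]_x U x + \int[P]_x (W x - U x).
    rewrite -ge0_integralD //; apply: eq_integral => x _.
    by rewrite addeC subeK.
  have Ufin : \int[P]_x U x \is a fin_num.
    by rewrite ge0_fin_numE ?integral_ge0 // (le_lt_trans _ (ltey (M%:E))) //; case/andP: (intM _ VsetU).
  apply/eqP; rewrite eq_le integral_ge0 // andbT.
  rewrite -(leeD2lE _ _ Ufin) adde0 -E.
  exact: (le_trans intWa aU).
have : (fun w => W w - U w) = \0 %[ae P].
  apply/(ae_eq_integral_abs P measurableT mD).
  by rewrite -intD; apply: eq_integral => x _; rewrite gee0_abs.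
move: YV YM; apply: filterS3 => w h1 /andP[h2 _] /(_ I) /= hD.
have -> : W w = U w by rewrite -(subeK (W w) (WUfin w)) hD add0e.
rewrite /U ge_min; apply/orP; right; rewrite ge_min; apply/orP; left.
by rewrite ge_max lexx (le_trans h2 h1).
Qed.

Lemma cond_esssup_spec G (sG : sigma_algebra setT G) (Gm : G `<=` measurable)
  (Y : Omega -> \bar R) (M : R) : (0 <= M)%R ->
  {ae P, forall w, 0 <= Y w <= M%:E} -> is_cond_esssup P G Y (cond_esssup P G Y).
Proof. by move=> M0 YM; apply: epsilon_spec; exact: cond_esssup_exists YM. Qed.

Lemma mul_ind_bnd (Z : Omega -> R) (m : R) A : (m <= 0)%R ->
  {ae P, forall w, m <= Z w <= 0}%R ->
  {ae P, forall w, 0 <= - mul_ind Z A w <= (- m)%:E}.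
Proof.
move=> m0 hZ; apply: filterS hZ => w /andP[h1 h2].
rewrite /mul_ind indicE; case: (w \in A); rewrite ?mulr1 ?mulr0 /=.
- by rewrite !lee_fin oppr_ge0 h2 lerN2.
- by rewrite !lee_fin oppr0 lexx oppr_ge0.
Qed.

Lemma Gmeas_if G (sG : sigma_algebra setT G) A (V : Omega -> \bar R) c :
  G A -> Gmeas_e G V -> Gmeas_e G (fun w => if w \in A then V w else c).
Proof.
move=> GA mV B mB.
have E := measurable_g_measurableTypeE sG.
have -> : (fun w => if w \in A then V w else c) @^-1` B =
    (A `&` V @^-1` B) `|` (~` A `&` [set _ | B c]).
  apply/seteqP; split => w /=; have [wA|wA] := pselect (A w).
  - by rewrite (mem_set wA) => h; left.
  - by rewrite (memNset wA) => h; right.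
  - by rewrite (mem_set wA) => -[[]|[]].
  - by rewrite (memNset wA) => -[[]|[]].
rewrite -E; apply: (@measurableU _ (g_sigma_algebraType G)).
- apply: (@measurableI _ (g_sigma_algebraType G)); rewrite E //; exact: mV.
- apply: (@measurableI _ (g_sigma_algebraType G)).
    by apply: (@measurableC _ (g_sigma_algebraType G)); rewrite E.
  have [Bc|Bc] := pselect (B c).
  + by rewrite (_ : [set _ | B c] = setT) //; apply/seteqP; split.
  + by rewrite (_ : [set _ | B c] = set0) //; apply/seteqP; split.
Qed.

Arguments cond_esssup_spec {G} sG Gm {Y M}.
Arguments cond_esssup_uniq {G Y W1 W2}.
Arguments Gmeas_if {G} sG {A V c}.
Arguments Gmeas_sub {G H f}.
Arguments mul_ind_bnd {Z m} A.

Lemma exist_Z F0 Ft (s0 : sigma_algebra setT F0) (st : sigma_algebra setT Ft)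
  (m0 : F0 `<=` measurable) (mt : Ft `<=` measurable) (F0t : F0 `<=` Ft)
  (X : Omega -> R) (M : R) : (0 <= M)%R -> {ae P, forall w, -M <= X w <= 0}%R ->
  exists Z, [/\ Gmeas Ft Z, {ae P, forall w, -M <= Z w <= 0}%R & same_essinf P F0 Ft Z X].
Proof.
move=> M0 hX.
pose Y0 := fun w => (- X w)%:E.
have Y0b : {ae P, forall w, 0 <= Y0 w <= M%:E}.
  by apply: filterS hX => w /andP[h1 h2]; rewrite /Y0 !lee_fin oppr_ge0 h2 lerNl.
have [mW YW minW] := cond_esssup_spec st mt M0 Y0b.
set W := cond_esssup P Ft Y0 in mW YW minW *.
have WM : {ae P, forall w, W w <= M%:E}.
  apply: minW; first exact: Gmeas_cst.
  by apply: filterS Y0b => w /andP[].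
pose Z := fun w => fine (- W w).
have WZ : {ae P, forall w, W w = (- Z w)%:E /\ (-M <= Z w <= 0)%R}.
  move: Y0b YW WM; apply: filterS3 => w /andP[h1 h2] h3 h4.
  have W0 : 0 <= W w := le_trans h1 h3.
  have Wfin : W w \is a fin_num by rewrite ge0_fin_numE // (le_lt_trans h4) // ltey.
  rewrite /Z fineN opprK fineK //; split => //.
  rewrite -(fineK Wfin) !lee_fin in W0 h4.
  by rewrite oppr_le0 W0 andbT lerN2 h4.
have M0' : (0 <= - - M)%R by rewrite opprK.
have mM : (- M <= 0)%R by rewrite oppr_le0.
have hZ : {ae P, forall w, -M <= Z w <= 0}%R by apply: filterS WZ => w [].
exists Z; split => //.
- apply/GmeasrP => //; rewrite /Z; apply: measurableT_comp => //.
  by apply: measurableT_comp => //; exact/GmeasP.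
- move=> A FtA; rewrite /cond_essinf.
  have bZ := mul_ind_bnd A mM hZ.
  have bX := mul_ind_bnd A mM hX.
  have [mV0 YV0 minV0] := cond_esssup_spec s0 m0 M0' bX.
  set V0 := cond_esssup P F0 _ in mV0 YV0 minV0 *.
  have key : is_cond_esssup P F0 (fun w => - mul_ind Z A w) V0.
    split => //.
    + pose V' := fun w => if w \in A then V0 w else +oo.
      have mV' : Gmeas_e Ft V' := Gmeas_if st FtA (Gmeas_sub F0t mV0).
      have Y0V' : {ae P, forall w, Y0 w <= V' w}.
        apply: filterS YV0 => w; rewrite /V' /mul_ind indicE.
        by case: (w \in A); rewrite ?mulr1 // leey.
      have := minW _ mV' Y0V'; move: WZ YV0; apply: filterS3 => w [hW _] h0 h.
      move: h0 h; rewrite /V' /mul_ind !indicE; case: (w \in A); rewrite ?mulr1 ?mulr0 //.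
      by move=> _ h; rewrite -EFinN -hW.
    + move=> V mV YZV; apply: minV0 => //.
      move: WZ YW YZV; apply: filterS3 => w [hW _] h1.
      rewrite /mul_ind !indicE; case: (w \in A); rewrite ?mulr1 ?mulr0 //.
      by move=> h2; rewrite -EFinN (le_trans h1) // hW EFinN.
  have := cond_esssup_uniq key (cond_esssup_spec s0 m0 M0' bZ).
  by apply: filterS => w ->.
Qed.

Lemma uniq_Z F0 Ft (s0 : sigma_algebra setT F0) (st : sigma_algebra setT Ft)
  (mF0 : F0 `<=` measurable) (Z1 Z2 : Omega -> R) (m : R) : (m <= 0)%R ->
  Gmeas Ft Z1 -> Gmeas Ft Z2 ->
  {ae P, forall w, m <= Z1 w <= 0}%R -> {ae P, forall w, m <= Z2 w <= 0}%R ->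
  (forall A, Ft A -> {ae P, forall w, cond_esssup P F0 (fun w => - mul_ind Z1 A w) w
                         = cond_esssup P F0 (fun w => - mul_ind Z2 A w) w}) ->
  {ae P, forall w, Z1 w <= Z2 w}%R.
Proof.
move=> m0 mZ1 mZ2 b1 b2 H.
have M0 : (0 <= - m)%R by rewrite oppr_ge0.
have hq : forall q : R, {ae P, forall w, ~ ((Z2 w < q)%R /\ (q <= Z1 w)%R)}.
  move=> q; have [q0|q0] := ltrP 0 q.
    apply: filterS b1 => w /andP[_ h] [_ h'].
    by have := le_trans h' h; rewrite leNgt q0.
  pose A := [set w | (Z2 w < q)%R /\ (q <= Z1 w)%R].
  have FtA : Ft A.
    have -> : A = Z2 @^-1` `]-oo, q[ `&` Z1 @^-1` `[q, +oo[.
      by apply/seteqP; split => w /=; rewrite !in_itv /= andbT.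
    have E := measurable_g_measurableTypeE st.
    rewrite -E; apply: (@measurableI _ (g_sigma_algebraType Ft)); rewrite E.
    - by apply: mZ2; exact: measurable_itv.
    - by apply: mZ1; exact: measurable_itv.
  have b1A := mul_ind_bnd A m0 b1.
  have b2A := mul_ind_bnd A m0 b2.
  have [mV1 YV1 minV1] := cond_esssup_spec s0 mF0 M0 b1A.
  have [mV2 YV2 minV2] := cond_esssup_spec s0 mF0 M0 b2A.
  have V1q : {ae P, forall w,
      cond_esssup P F0 (fun w => - mul_ind Z1 A w) w <= (- q)%:E}.
    apply: minV1; first exact: Gmeas_cst.
    apply: filterS b1 => w /andP[h1 h2]; rewrite /mul_ind indicE.
    case: (boolP (w \in A)) => wA; rewrite ?mulr1 ?mulr0.
    + by have [_ hq1] := set_mem wA; rewrite -EFinN lee_fin lerN2.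
    + by rewrite -EFinN lee_fin oppr0 oppr_ge0.
  move: (H A FtA) YV2 V1q; apply: filterS3 => w e h2 h1 [hw1 hw2].
  have wA : w \in A by apply/mem_set.
  move: h2; rewrite /mul_ind indicE wA mulr1 -e => h2.
  by have := le_trans h2 h1; rewrite -EFinN lee_fin lerN2 leNgt hw1.
pose qs := fun n : nat => (ratr (odflt (0%R : rat) (unpickle n)) : R).
have : {ae P, forall w, forall n, ~ ((Z2 w < qs n)%R /\ (qs n <= Z1 w)%R)}.
  by apply: ae_foralln => n; exact: hq.
apply: filterS => w h; rewrite leNgt; apply/negP => /rat_in_itvoo [r].
rewrite in_itv /= => /andP[h1 h2].
by apply: (h (pickle r)); rewrite /qs pickleK /=; split => //; exact: ltW.
Qed.

Arguments exist_Z {F0 Ft} s0 st m0 mt F0t {X M}.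
Arguments uniq_Z {F0 Ft} s0 st mF0 {Z1 Z2 m}.

Lemma main_core F0 Ft (s0 : sigma_algebra setT F0) (st : sigma_algebra setT Ft)
  (mF0 : F0 `<=` measurable) (mFt : Ft `<=` measurable) (F0t : F0 `<=` Ft)
  (X : Omega -> R) (M : R) : (0 <= M)%R -> {ae P, forall w, -M <= X w <= 0}%R ->
  exists Z, [/\ Gmeas Ft Z, {ae P, forall w, -M <= Z w <= 0}%R,
    same_essinf P F0 Ft Z X &
    forall Z' m, (m <= 0)%R -> Gmeas Ft Z' -> {ae P, forall w, m <= Z' w <= 0}%R ->
      same_essinf P F0 Ft Z' X -> {ae P, forall w, Z' w = Z w}].
Proof.
move=> M0 hX.
have [Z [mZ bZ sZ]] := exist_Z s0 st mF0 mFt F0t M0 hX.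
exists Z; split => // Z' m m0 mZ' bZ' sZ'.
pose m' := Num.min m (- M)%R.
have m'0 : (m' <= 0)%R by rewrite ge_min m0.
have b1 : {ae P, forall w, m' <= Z' w <= 0}%R.
  by apply: filterS bZ' => w /andP[h1 h2]; rewrite h2 andbT ge_min h1.
have b2 : {ae P, forall w, m' <= Z w <= 0}%R.
  by apply: filterS bZ => w /andP[h1 h2]; rewrite h2 andbT ge_min h1 orbT.
have H : forall A, Ft A -> {ae P, forall w,
    cond_esssup P F0 (fun w => - mul_ind Z' A w) w
    = cond_esssup P F0 (fun w => - mul_ind Z A w) w}.
  move=> A FtA; move: (sZ' A FtA) (sZ A FtA); apply: filterS2 => w.
  rewrite /cond_essinf => e1 e2; apply: oppe_inj; by rewrite e1 e2.
have u1 := uniq_Z s0 st mF0 m'0 mZ' mZ b1 b2 H.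
have H' : forall A, Ft A -> {ae P, forall w,
    cond_esssup P F0 (fun w => - mul_ind Z A w) w
    = cond_esssup P F0 (fun w => - mul_ind Z' A w) w}.
  by move=> A FtA; apply: filterS (H A FtA) => w ->.
have u2 := uniq_Z s0 st mF0 m'0 mZ mZ' b2 b1 H'.
by move: u1 u2; apply: filterS2 => w a b; apply/eqP; rewrite eq_le a b.
Qed.

Arguments main_core {F0 Ft} s0 st mF0 mFt F0t {X M}.

End S.

Theorem mainTheorem19 (d : measure_display) (Omega : measurableType d)
  (R : realType) (P : probability Omega R) (T : R) (F : R -> set (set Omega))
  (t : R) :
  measure_is_complete P ->
  filtration P T F ->
  0 <= t <= T ->
  (* (a) *)
  (forall X : Omega -> R, Linf_neg P (F T) X ->
     exists Z : Omega -> R,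
       [/\ Linf_neg P (F t) Z, same_essinf P (F 0) (F t) Z X &
           forall Z' : Omega -> R, Linf_neg P (F t) Z' ->
             same_essinf P (F 0) (F t) Z' X -> {ae P, forall w, Z' w = Z w}])
  /\
  (* (b) *)
  (forall X : Omega -> R, Linf P (F T) X -> {ae P, forall w, X w < 0} ->
     exists Z : Omega -> R,
       [/\ L0_neg_bdd_below P (F t) Z, same_essinf P (F 0) (F t) Z X &
           forall Z' : Omega -> R, L0_neg_bdd_below P (F t) Z' ->
             same_essinf P (F 0) (F t) Z' X -> {ae P, forall w, Z' w = Z w}]).
Proof.
move=> _ [hF hmono] /andP[t0 tT].
have T0 : 0 <= T := le_trans t0 tT.
have [s0 mF0 _] := hF 0 (ltac:(by rewrite lexx T0)).
have [st mFt _] := hF t (ltac:(by rewrite t0 tT)).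
have F0t := hmono 0 t (lexx 0) t0 tT.
have bnd : forall (X : Omega -> R) (M : R), {ae P, forall w, `|X w| <= M} ->
    {ae P, forall w, X w <= 0} ->
    {ae P, forall w, - Num.max M 0 <= X w <= 0}.
  move=> X M hM hn; move: hM hn; apply: filterS2 => w h1 h2.
  rewrite h2 andbT lerNl; move/ler_normlP: h1 => [h1 _].
  by rewrite (le_trans h1) // le_max lexx.
have max0 : forall M : R, 0 <= Num.max M 0 by move=> M; rewrite le_max lexx orbT.
split.
- move=> X [mX [M hM] hneg].
  have [Z [mZ bZ sZ uZ]] := @main_core _ _ _ P _ _ s0 st mF0 mFt F0t _ _ (max0 M) (bnd X M hM hneg).
  exists Z; split => //.
  + split => //; last by apply: filterS bZ => w /andP[].
    exists (Num.max M 0); apply: filterS bZ => w /andP[h1 h2].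
    by rewrite ler_norml h1 (le_trans h2 (max0 M)).
  + move=> Z' [mZ' [M2 hM2] hneg2] sZ'.
    apply: (uZ Z' (- Num.max M2 0)) => //; first by rewrite oppr_le0.
    exact: bnd.
- move=> X [mX [M hM]] hlt.
  have hneg : {ae P, forall w, X w <= 0} by apply: filterS hlt => w /ltW.
  have [Z [mZ bZ sZ uZ]] := @main_core _ _ _ P _ _ s0 st mF0 mFt F0t _ _ (max0 M) (bnd X M hM hneg).
  exists Z; split => //.
  + split => //; last by apply: filterS bZ => w /andP[].
    by exists (- Num.max M 0); apply: filterS bZ => w /andP[].
  + move=> Z' [mZ' [m hm] hneg2] sZ'.
    apply: (uZ Z' (Num.min m 0)) => //; first by rewrite ge_min lexx orbT.
    by move: hm hneg2; apply: filterS2 => w h1 h2; rewrite h2 andbT ge_min h1.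
Qed.
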